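(* Consider the two-stage robust problem $\min_{x\in\mathcal X}c_1x+\max_{u\in\mathcal U(x)}\min_{y\in\mathcal Y(x)}\hat c_2(u)y$, where $\mathcal U(x)=\{u\in\mathbb R^{n_u}_+: F(x)u\le h+Gx\}$ is nonempty and bounded for every $x\in\mathcal X$, $\mathcal Y(x)=\{y\in\mathbb R^{n_y}_+: B_2y\ge d-B_1x\}$ and $\hat c_2(u)=(\hat Eu)^\intercal+c_2$. It is equivalent to $\min_{x\in\mathcal X,\ y\in\mathcal Y(x)}c_1x+c_2y+\max_{u\in\mathcal U(x)}(\hat Eu)^\intercal y$, which is further equivalent to the single-level problem $\min\{c_1x+c_2y+(h+Gx)^\intercal\lambda:\ x\in\mathcal X,\ y\in\mathcal Y(x),\ F(x)^\intercal\lambda-\hat E^\intercal y\ge 0,\ \lambda\ge 0\}$.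
   Context: $\mathcal X=\{x\in\mathbb Z^{m_x}_+\times\mathbb R^{n_x}_+: Ax\ge b\}$; $F(x)$ is a matrix depending on $x$. The optimal value of an infeasible minimization problem is $+\infty$. Assume the mixed integer program $\min\{c_1x+\hat c_2(u)y: x\in\mathcal X,u\in\mathcal U(x),y\in\mathcal Y(x)\}$ has a finite optimal value (in particular $\mathcal Y(x)\neq\emptyset$ for some $x\in\mathcal X$). Two formulations are called equivalent if they have the same optimal value and any optimal first-stage solution of one is optimal for the other, and vice versa. *)

(* Defs.v *)
From HB Require Import structures.
From mathcomp Require Import all_boot all_order all_algebra.
From mathcomp Require Import all_classical all_reals all_analysis.
Set Implicit Arguments. Unset Strict Implicit. Unset Printing Implicit Defensive.
Import Order.TTheory GRing.Theory Num.Theory.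
Local Open Scope classical_set_scope.
Local Open Scope ring_scope.

Section TwoStage.
Variable R : realType.

Definition ts_cvge (k : nat) (v w : 'cV[R]_k) : Prop := forall i, w i 0 <= v i 0.

Definition ts_sdot (k : nat) (a : 'rV[R]_k) (v : 'cV[R]_k) : R := (a *m v) 0 0.

(* dimensions: x in Z^mx_+ x R^nx_+ (first mx coordinates integral),
   A x >= b has p rows; U(x) lives in R^nu with mu constraints;
   Y(x) lives in R^ny with my constraints. *)
Variables (mx nx p mu nu my ny : nat).
Variables (A : 'M[R]_(p, mx + nx)) (b : 'cV[R]_p).
Variables (F : 'cV[R]_(mx + nx) -> 'M[R]_(mu, nu)) (h : 'cV[R]_mu)
          (G : 'M[R]_(mu, mx + nx)).
Variables (B1 : 'M[R]_(my, mx + nx)) (B2 : 'M[R]_(my, ny)) (d : 'cV[R]_my).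
Variables (c1 : 'rV[R]_(mx + nx)) (c2 : 'rV[R]_ny) (Ehat : 'M[R]_(ny, nu)).

Definition ts_Xset : set 'cV[R]_(mx + nx) :=
  [set x | ts_cvge x 0 /\
           (forall i : 'I_(mx + nx), (i < mx)%N -> exists z : int, x i 0 = z%:~R) /\
           ts_cvge (A *m x) b].

Definition ts_Uset (x : 'cV[R]_(mx + nx)) : set 'cV[R]_nu :=
  [set u | ts_cvge u 0 /\ ts_cvge (h + G *m x) (F x *m u)].

Definition ts_Yset (x : 'cV[R]_(mx + nx)) : set 'cV[R]_ny :=
  [set y | ts_cvge y 0 /\ ts_cvge (B2 *m y) (d - B1 *m x)].

Definition ts_c2hat (u : 'cV[R]_nu) : 'rV[R]_ny := (Ehat *m u)^T + c2.

Local Open Scope ereal_scope.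

Definition ts_obj1 (x : 'cV[R]_(mx + nx)) : \bar R :=
  (ts_sdot c1 x)%:E +
  ereal_sup [set ereal_inf [set (ts_sdot (ts_c2hat u) y)%:E | y in ts_Yset x] | u in ts_Uset x].

Definition ts_val1 : \bar R := ereal_inf [set ts_obj1 x | x in ts_Xset].

Definition ts_opt1 (x : 'cV[R]_(mx + nx)) : Prop := ts_Xset x /\ ts_obj1 x = ts_val1.

Definition ts_obj2 (x : 'cV[R]_(mx + nx)) (y : 'cV[R]_ny) : \bar R :=
  (ts_sdot c1 x + ts_sdot c2 y)%:E +
  ereal_sup [set (ts_sdot (Ehat *m u)^T y)%:E | u in ts_Uset x].

Definition ts_val2 : \bar R :=
  ereal_inf [set ts_obj2 xy.1 xy.2 | xy in [set xy | ts_Xset xy.1 /\ ts_Yset xy.1 xy.2]].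

Definition ts_opt2 (x : 'cV[R]_(mx + nx)) : Prop :=
  exists y, [/\ ts_Xset x, ts_Yset x y & ts_obj2 x y = ts_val2].

Definition ts_feas3 (x : 'cV[R]_(mx + nx)) (y : 'cV[R]_ny) (l : 'cV[R]_mu) : Prop :=
  [/\ ts_Xset x, ts_Yset x y, ts_cvge ((F x)^T *m l - Ehat^T *m y) 0 & ts_cvge l 0].

Definition ts_obj3 (x : 'cV[R]_(mx + nx)) (y : 'cV[R]_ny) (l : 'cV[R]_mu) : R :=
  ts_sdot c1 x + ts_sdot c2 y + ts_sdot (h + G *m x)^T l.

Definition ts_val3 : \bar R :=
  ereal_inf [set (ts_obj3 t.1.1 t.1.2 t.2)%:E | t in [set t | ts_feas3 t.1.1 t.1.2 t.2]].

Definition ts_opt3 (x : 'cV[R]_(mx + nx)) : Prop :=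
  exists y l, ts_feas3 x y l /\ (ts_obj3 x y l)%:E = ts_val3.

Definition ts_valMIP : \bar R :=
  ereal_inf [set ((ts_sdot c1 t.1) + ts_sdot (ts_c2hat t.2.1) t.2.2)%:E
            | t in [set t : 'cV[R]_(mx + nx) * ('cV[R]_nu * 'cV[R]_ny) |
                    ts_Xset t.1 /\ ts_Uset t.1 t.2.1 /\ ts_Yset t.1 t.2.2]].

End TwoStage.

(* Main.v *)
Require Import Defs.
From HB Require Import structures.
From mathcomp Require Import all_boot all_order all_algebra.
From mathcomp Require Import all_classical all_reals all_analysis.
From mathcomp Require Import ring lra.
From Stdlib Require List.
From Stdlib Require Import Classical_Prop.
Set Implicit Arguments. Unset Strict Implicit. Unset Printing Implicit Defensive.
Import Order.TTheory GRing.Theory Num.Theory.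
Local Open Scope classical_set_scope.
Local Open Scope ring_scope.

Section FM.
Variable R : realFieldType.

Definition dotn (n : nat) (a x : nat -> R) : R := \sum_(i < n) a i * x i.
Definition cstr := ((nat -> R) * R)%type.
Definition feasn n (s : seq cstr) (x : nat -> R) :=
  forall c, List.In c s -> c.2 <= dotn n c.1 x.
Definition incone (s : seq cstr) (p : cstr) :=
  exists ws : seq (R * cstr),
    (forall wc, List.In wc ws -> 0 <= wc.1 /\ List.In wc.2 s) /\
    (forall i, p.1 i = \sum_(wc <- ws) wc.1 * wc.2.1 i) /\
    p.2 = \sum_(wc <- ws) wc.1 * wc.2.2.

Lemma incone0 s : incone s (fun _ => 0, 0).
Proof. by exists [::]; split=> //; split=> [i|]; rewrite big_nil. Qed.

Lemma incone_el s c : List.In c s -> incone s c.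
Proof.
move=> cs; exists [:: (1, c)]; split; first by move=> wc [<-|//]; split.
by split=> [i|]; rewrite big_seq1 mul1r.
Qed.

Lemma incone_ext s p q : incone s p -> (forall i, p.1 i = q.1 i) -> p.2 = q.2 ->
  incone s q.
Proof.
move=> [ws [H1 [H2 H3]]] e1 e2; exists ws; split=> //; split=> [i|].
  by rewrite -e1. by rewrite -e2.
Qed.

Lemma incone_add s p q : incone s p -> incone s q ->
  incone s (fun i => p.1 i + q.1 i, p.2 + q.2).
Proof.
move=> [ws [H1 [H2 H3]]] [vs [G1 [G2 G3]]]; exists (ws ++ vs); split.
  by move=> wc /List.in_app_iff [/H1|/G1].
by split=> [i|]; rewrite big_cat /= ?H2 ?G2 ?H3 ?G3.
Qed.

Lemma incone_scale s p t : 0 <= t -> incone s p ->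
  incone s (fun i => t * p.1 i, t * p.2).
Proof.
move=> t0 [ws [H1 [H2 H3]]].
exists (map (fun wc => (t * wc.1, wc.2)) ws); split.
  move=> wc /List.in_map_iff [wc' [<- /H1 [h1 h2]]]; split=> //=.
  exact: mulr_ge0.
split=> [i|]; rewrite big_map /= ?H2 ?H3 mulr_sumr; apply: eq_bigr => wc _;
  by rewrite mulrA.
Qed.

Lemma incone_trans s s' p : (forall c, List.In c s' -> incone s c) ->
  incone s' p -> incone s p.
Proof.
move=> Hs [ws [H1 [H2 H3]]].
apply: (@incone_ext s (fun i => \sum_(wc <- ws) wc.1 * wc.2.1 i,
                       \sum_(wc <- ws) wc.1 * wc.2.2)) => //.
elim: ws H1 {H2 H3} => [|wc ws IH] H1.
  by apply: (incone_ext (incone0 s)) => *; rewrite /= big_nil.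
have [w0 inc] := H1 wc (or_introl erefl).
apply: (incone_ext (incone_add (incone_scale w0 (Hs _ inc)) (IH (fun x hx => H1 x (or_intror hx)))));
  by move=> *; rewrite /= big_cons.
Qed.

Lemma incone_coord0 s p k : (forall c, List.In c s -> c.1 k = 0) -> incone s p ->
  p.1 k = 0.
Proof.
move=> Hs [ws [H1 [H2 H3]]]; rewrite H2.
elim: ws H1 {H2 H3} => [|wc ws IH] H1; first by rewrite big_nil.
rewrite big_cons Hs ?mulr0 ?add0r; first exact: IH (fun x hx => H1 x (or_intror hx)).
exact: (proj2 (H1 _ (or_introl erefl))).
Qed.

Lemma dotn_lin n (a b : R) f g x :
  dotn n (fun i => a * f i + b * g i) x = a * dotn n f x + b * dotn n g x.
Proof.
rewrite /dotn !mulr_sumr -big_split; apply: eq_bigr => i _ /=; ring.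
Qed.

Lemma dotn_ext n a x y : (forall i, (i < n)%N -> x i = y i) -> dotn n a x = dotn n a y.
Proof. by move=> e; apply: eq_bigr => i _; rewrite e. Qed.

Lemma dotn_ext1 n a b x : (forall i, (i < n)%N -> a i = b i) -> dotn n a x = dotn n b x.
Proof. by move=> e; apply: eq_bigr => i _; rewrite e. Qed.

Lemma dotnS n a x : dotn n.+1 a x = dotn n a x + a n * x n.
Proof. by rewrite /dotn big_ord_recr. Qed.

Lemma between (T1 T2 : Type) (P : seq T1) (N : seq T2) (f : T1 -> R) (g : T2 -> R) :
  (forall p q, List.In p P -> List.In q N -> f p <= g q) ->
  exists t, (forall p, List.In p P -> f p <= t) /\ (forall q, List.In q N -> t <= g q).
Proof.
elim: P => [|p P IH] H.
  suff [t Ht] : exists t, forall q, List.In q N -> t <= g q by exists t; split.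
  elim: N {H} => [|q N [t Ht]]; first by exists 0.
  exists (Num.min t (g q)) => q' [<-|hq']; first by rewrite ge_min lexx orbT.
  by rewrite ge_min Ht.
have [t [Ht1 Ht2]] := IH (fun p q hp hq => H p q (or_intror hp) hq).
exists (Num.max t (f p)); split.
  by move=> p' [<-|hp']; rewrite le_max ?lexx ?orbT // Ht1.
by move=> q hq; rewrite ge_max Ht2 // H //; left.
Qed.

Lemma divle (a b c d : R) : 0 < b -> 0 < d -> a * d <= c * b -> a / b <= c / d.
Proof.
move=> b0 d0 h; rewrite ler_pdivrMr // mulrAC ler_pdivlMr //.
Qed.

Theorem farkas n : forall s, ~ (exists x, feasn n s x) ->
  exists p, incone s p /\ (forall i, (i < n)%N -> p.1 i = 0) /\ 0 < p.2.
Proof.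
elim: n => [|n IH] s Hinf.
  case: (classic (exists c, List.In c s /\ 0 < c.2)) => [[c [cs c2]]|nc].
    by exists c; split; [exact: incone_el|split].
  exfalso; apply: Hinf; exists (fun _ => 0) => c cs; rewrite /dotn big_ord0.
  by rewrite leNgt; apply/negP => h; apply: nc; exists c.
pose Z := List.filter (fun c : cstr => c.1 n == 0) s.
pose P := List.filter (fun c : cstr => 0 < c.1 n) s.
pose N := List.filter (fun c : cstr => c.1 n < 0) s.
pose comb (p q : cstr) : cstr := (fun i => (- q.1 n) * p.1 i + p.1 n * q.1 i,
                                 (- q.1 n) * p.2 + p.1 n * q.2).
pose s' := Z ++ List.flat_map (fun p => List.map (comb p) N) P.
have in_s' c : List.In c s' ->
    (List.In c s /\ c.1 n = 0) \/ exists p q, [/\ List.In p s, 0 < p.1 n,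
        List.In q s, q.1 n < 0 & c = comb p q].
  case/List.in_app_iff => [/List.filter_In [cs /eqP c0]|]; first by left.
  case/List.in_flat_map => p [/List.filter_In [ps p0]] /List.in_map_iff [q [<-]].
  by case/List.filter_In => qs q0; right; exists p, q.
have combP p q : List.In p s -> 0 < p.1 n -> List.In q s -> q.1 n < 0 ->
    List.In (comb p q) s'.
  move=> ps p0 qs q0; apply/List.in_app_iff; right; apply/List.in_flat_map.
  exists p; split; first by apply/List.filter_In.
  by apply/List.in_map_iff; exists q; split=> //; apply/List.filter_In.
case: (classic (exists x, feasn n s' x)) => [[x' Hx']|ninf]; last first.
  have [p [pin [p0 pp]]] := IH s' ninf; exists p; split.
    apply: incone_trans pin => c /in_s' [[cs _]|[p1 [q [p1s p1n qs qn ->]]]].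
      exact: incone_el.
    have q0 : 0 <= - q.1 n by rewrite oppr_ge0 ltW.
    exact: (incone_ext (incone_add (incone_scale q0 (incone_el p1s))
                                   (incone_scale (ltW p1n) (incone_el qs)))).
  split=> // i; rewrite ltnS leq_eqVlt => /orP [/eqP ->|/p0 //].
  apply: incone_coord0 pin => c /in_s' [[_ //]|[p1 [q [_ _ _ _ ->]]]] /=; ring.
exfalso; apply: Hinf.
case: (@between _ _ P N
   (fun p => (p.2 - dotn n p.1 x') / p.1 n)
   (fun q => (dotn n q.1 x' - q.2) / (- q.1 n))) => [p q /List.filter_In [ps p0] /List.filter_In [qs q0]|t [Ht1 Ht2]].
  have := Hx' _ (combP p q ps p0 qs q0); rewrite /= dotn_lin => h.
  apply: divle => //; first by rewrite oppr_gt0.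
  nra.
exists (fun i => if (i < n)%N then x' i else t) => c cs.
rewrite dotnS ltnn (@dotn_ext n _ _ x'); last by move=> i ->.
case: (ltrgtP (c.1 n) 0) => hc.
- have hN : List.In c N by apply/List.filter_In.
  have := Ht2 c hN; rewrite ler_pdivlMr ?oppr_gt0 // => h; nra.
- have hP : List.In c P by apply/List.filter_In.
  have := Ht1 c hP; rewrite ler_pdivrMr // => h; nra.
- rewrite hc mul0r addr0; apply: Hx'; apply/List.in_app_iff; left.
  by apply/List.filter_In; split=> //; rewrite hc eqxx.
Qed.

Definition ofun n (f : 'I_n -> R) : nat -> R :=
  fun k => if @insub _ (fun k => (k < n)%N) 'I_n k is Some kk then f kk else 0.

Lemma ofunE n (f : 'I_n -> R) (k : 'I_n) : ofun f k = f k.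
Proof. by rewrite /ofun valK. Qed.

Lemma sum_delta m (j0 : 'I_m) (F : 'I_m -> R) : \sum_j (j == j0)%:R * F j = F j0.
Proof.
rewrite (bigD1 j0) //= eqxx mul1r big1 ?addr0 // => j /negbTE ->; by rewrite mul0r.
Qed.

Lemma incone_map m (f : 'I_m -> cstr) p :
  incone (List.map f (enum 'I_m)) p ->
  exists y : 'I_m -> R, (forall j, 0 <= y j) /\
    (forall i, p.1 i = \sum_j y j * (f j).1 i) /\ p.2 = \sum_j y j * (f j).2.
Proof.
move=> [ws [H1 [H2 H3]]].
suff [y [y0 [e1 e2]]] : exists y : 'I_m -> R, (forall j, 0 <= y j) /\
    (forall i, \sum_(wc <- ws) wc.1 * wc.2.1 i = \sum_j y j * (f j).1 i) /\
    \sum_(wc <- ws) wc.1 * wc.2.2 = \sum_j y j * (f j).2.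
  by exists y; split=> //; split=> [i|]; rewrite ?H2 ?H3.
elim: ws H1 {H2 H3} => [|wc ws IH] H1.
  exists (fun _ => 0); split=> //; split=> [i|]; rewrite big_nil big1 // => j _;
  by rewrite mul0r.
have [w0 /List.in_map_iff [j0 [fj0 _]]] := H1 wc (or_introl erefl).
have [y [y0 [e1 e2]]] := IH (fun x hx => H1 x (or_intror hx)).
exists (fun j => y j + wc.1 * (j == j0)%:R); split.
  by move=> j; apply: addr_ge0 => //; apply: mulr_ge0.
split=> [i|]; rewrite big_cons ?e1 ?e2;
  under [RHS]eq_bigr do rewrite mulrDl -mulrA;
  by rewrite big_split /= -mulr_sumr sum_delta fj0 addrC.
Qed.

Lemma mem_In (T : eqType) (l : seq T) x : x \in l -> List.In x l.
Proof.
elim: l => [//|y l IH]; rewrite in_cons => /orP [/eqP ->|/IH]; by [left|right].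
Qed.

Theorem farkasM m n (A : 'M[R]_(m, n)) (b : 'cV[R]_m) :
  ~ (exists z : 'cV_n, forall i, b i 0 <= (A *m z) i 0) ->
  exists y : 'cV_m, (forall i, 0 <= y i 0) /\ y^T *m A = 0 /\ 0 < (y^T *m b) 0 0.
Proof.
move=> Hinf.
pose f (j : 'I_m) : cstr := (ofun (A j), b j 0).
have [|p [pin [p0 pp]]] := @farkas n (List.map f (enum 'I_m)).
  move=> [x Hx]; apply: Hinf; exists (\col_(i < n) x i) => j.
  have := Hx (f j) (List.in_map f _ _ (mem_In (mem_enum _ j))).
  rewrite /= /dotn !mxE; under eq_bigr do rewrite ofunE.
  suff -> : \sum_j0 A j j0 * (\col_i x i) j0 0 = \sum_i A j i * x i by [].
  by apply: eq_bigr => i _; rewrite mxE.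
have [y [y0 [e1 e2]]] := incone_map pin.
exists (\col_j y j); split; first by move=> i; rewrite mxE.
split.
  apply/matrixP => i k; rewrite mxE [RHS]mxE; transitivity (p.1 k); last exact: p0.
  rewrite e1; apply: eq_bigr => j _; rewrite /= ofunE !mxE //.
rewrite e2 in pp; rewrite mxE.
suff -> : \sum_j (\col_j0 y j0)^T 0 j * b j 0 = \sum_j y j * (f j).2 by [].
by apply: eq_bigr => j _; rewrite !mxE.
Qed.
End FM.

Section LP.
Variable R : realFieldType.

Lemma cvge_colP m1 m2 (a1 b1 : 'cV[R]_m1) (a2 b2 : 'cV[R]_m2) :
  (forall i, (col_mx a1 a2) i 0 <= (col_mx b1 b2) i 0) <->
  (forall i, a1 i 0 <= b1 i 0) /\ (forall i, a2 i 0 <= b2 i 0).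
Proof.
split=> [H|[H1 H2] i].
  by split=> i; [have := H (lshift m2 i) | have := H (rshift m1 i)];
    rewrite ?col_mxEu ?col_mxEd.
by rewrite -(splitK i); case: (fintype.split i) => k /=; rewrite ?col_mxEu ?col_mxEd.
Qed.

Lemma trmul_col m1 m2 n (w : 'cV[R]_(m1 + m2)) (X : 'M[R]_(m1, n)) (Y : 'M[R]_(m2, n)) :
  w^T *m col_mx X Y = (usubmx w)^T *m X + (dsubmx w)^T *m Y.
Proof. by rewrite -{1}(vsubmxK w) tr_col_mx mul_row_col. Qed.

Lemma weakd m n (A : 'M[R]_(m, n)) (b : 'cV_m) (z : 'cV_n) (y : 'cV_m) : (forall i, 0 <= y i 0) ->
  (forall i, b i 0 <= (A *m z) i 0) -> (y^T *m b) 0 0 <= (y^T *m A *m z) 0 0.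
Proof.
move=> y0 H; rewrite -mulmxA !mxE; apply: ler_sum => i _; rewrite !mxE.
by apply: ler_wpM2l => //; move: (H i); rewrite mxE.
Qed.

Lemma pos_div (S a x : R) : 0 < S -> a * S <= S * x -> a <= x.
Proof. move=> S0 h; nra. Qed.

Lemma pos_divlt (S a x : R) : 0 < S -> S * x < a * S -> x < a.
Proof. move=> S0 h; nra. Qed.

Theorem lp_dual m n (A : 'M[R]_(m, n)) (b : 'cV[R]_m) (c : 'rV[R]_n) (v : R) :
  (exists z : 'cV_n, forall i, b i 0 <= (A *m z) i 0) ->
  (forall z : 'cV_n, (forall i, b i 0 <= (A *m z) i 0) -> v <= (c *m z) 0 0) ->
  exists y : 'cV_m, [/\ forall i, 0 <= y i 0, y^T *m A = c & v <= (y^T *m b) 0 0].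
Proof.
move=> [z0 Hz0] Hv.
case: (classic (exists y : 'cV_m, [/\ forall i, 0 <= y i 0, y^T *m A = c &
   v <= (y^T *m b) 0 0])) => // Hno; exfalso.
pose A2 := col_mx (col_mx 1%:M A^T) (col_mx (-A^T) b^T).
pose b2 : 'cV_((m + n) + (n + 1)) := col_mx (col_mx 0 c^T) (col_mx (-c^T) v%:M).
case: (@farkasM _ _ _ A2 b2) => [[y Hy]|w [w0 [wA wb]]].
  apply: Hno; exists y.
  rewrite /A2 !mul_col_mx mul1mx mulNmx in Hy.
  move/cvge_colP: Hy => [/cvge_colP [H1 H2] /cvge_colP [H3 H4]].
  split.
  - by move=> i; move: (H1 i); rewrite !mxE.
  - apply: trmx_inj; rewrite trmx_mul trmxK; apply/matrixP => i j.
    rewrite (ord1 j); apply/le_anti; rewrite H2 andbT.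
    by move: (H3 i); rewrite !mxE lerN2.
  - move: (H4 0); rewrite -[b^T *m y]trmxK trmx_mul trmxK !mxE eqxx mulr1n.
    by [].
set r := usubmx (usubmx w); set p := dsubmx (usubmx w).
set q := usubmx (dsubmx w); set s := dsubmx (dsubmx w).
have r0 i : 0 <= r i 0 by rewrite !mxE.
have s0 : 0 <= s 0 0 by rewrite !mxE.
have E i : r i 0 + (A *m p) i 0 - (A *m q) i 0 + b i 0 * s 0 0 = 0.
  have := congr1 (fun M : 'M[R]_(1, m) => M 0 i) wA.
  rewrite /A2 !trmul_col mulmx1 mulmxN -!trmx_mul /= -/r -/p -/q -/s.
  by rewrite !mxE big_ord1 !mxE !addrA.
have Eb : 0 < (c *m p) 0 0 - (c *m q) 0 0 + v * s 0 0.
  move: wb; rewrite /b2 !trmul_col mulmx0 mulmxN -!trmx_mul mul_mx_scalar /= -/r -/p -/q -/s.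
  by rewrite !mxE add0r !addrA.
have EA i : (A *m (q - p)) i 0 = r i 0 + b i 0 * s 0 0.
  rewrite mulmxBr !mxE; have := E i; rewrite !mxE => h; lra.
have Ec : (c *m (q - p)) 0 0 < v * s 0 0.
  rewrite mulmxBr !mxE; move: Eb; rewrite !mxE => h; lra.
have [S0|S0] : 0 < s 0 0 \/ s 0 0 = 0.
  by move: s0; rewrite le_eqVlt => /orP [/eqP ->|->]; [right|left].
- have sn0 : s 0 0 != 0 by rewrite gt_eqF.
  have hf : forall i, b i 0 <= (A *m ((s 0 0)^-1 *: (q - p))) i 0.
    move=> i; rewrite -scalemxAr mxE; apply: (pos_div S0); rewrite mulVKf // EA.
    by rewrite lerDr.
  have := Hv _ hf; rewrite -scalemxAr mxE leNgt => /negP; apply.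
  apply: pos_divlt S0 _; rewrite mulVKf //; lra.
- pose k := ((c *m z0) 0 0 - v + 1) / (- (c *m (q - p)) 0 0).
  have cneg : (c *m (q - p)) 0 0 < 0 by rewrite S0 mulr0 in Ec.
  have k0 : 0 <= k.
    by apply: divr_ge0; [have := Hv z0 Hz0; lra | rewrite oppr_ge0 ltW].
  have hf : forall i, b i 0 <= (A *m (z0 + k *: (q - p))) i 0.
    move=> i; rewrite mulmxDr -scalemxAr mxE [X in _ + X]mxE EA S0 mulr0 addr0.
    have := Hz0 i; have := r0 i; nra.
  have := Hv _ hf; rewrite mulmxDr -scalemxAr mxE [X in _ + X]mxE.
  have -> : k * (c *m (q - p)) 0 0 = - ((c *m z0) 0 0 - v + 1).
    by rewrite /k invrN mulrN mulNr mulfVK // lt_eqF.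
  rewrite leNgt => /negP; apply; lra.
Qed.
End LP.

Section LP2.
Variable R : realType.

Theorem lp_opt m n (A : 'M[R]_(m, n)) (b : 'cV[R]_m) (c : 'rV[R]_n) :
  (exists z : 'cV_n, forall i, b i 0 <= (A *m z) i 0) ->
  (exists L, forall z : 'cV_n, (forall i, b i 0 <= (A *m z) i 0) -> L <= (c *m z) 0 0) ->
  exists (z : 'cV_n) (y : 'cV_m), [/\ forall i, b i 0 <= (A *m z) i 0,
     forall i, 0 <= y i 0, y^T *m A = c & (c *m z) 0 0 = (y^T *m b) 0 0].
Proof.
move=> [z0 Hz0] [L HL].
pose V : set R := fun x => exists z : 'cV_n,
   (forall i, b i 0 <= (A *m z) i 0) /\ (c *m z) 0 0 = x.
have Vlb : has_lbound V by exists L => x [z [hz <-]]; exact: HL.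
have V0 : nonempty V by exists ((c *m z0) 0 0); exists z0.
have hv (z : 'cV_n) : (forall i, b i 0 <= (A *m z) i 0) -> inf V <= (c *m z) 0 0.
  by move=> hz; apply: (ge_inf Vlb); exists z.
have [y [y0 yA yb]] := lp_dual (ex_intro _ z0 Hz0) hv.
suff [z [hz hcz]] : exists z : 'cV_n, (forall i, b i 0 <= (A *m z) i 0) /\
    (c *m z) 0 0 <= (y^T *m b) 0 0.
  exists z, y; split=> //; apply/le_anti; rewrite hcz /=.
  by have := weakd y0 hz; rewrite yA.
case: (classic (exists z : 'cV_n, (forall i, b i 0 <= (A *m z) i 0) /\
    (c *m z) 0 0 <= (y^T *m b) 0 0)) => // Hno; exfalso.
case: (@farkasM _ _ _ (col_mx A (- c)) (col_mx b (- ((y^T *m b) 0 0)%:M)))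
   => [[z Hz]|w [w0 [wA wb]]].
  apply: Hno; exists z; rewrite mul_col_mx in Hz.
  move/cvge_colP: Hz => [H1 /(_ 0) H2]; split=> //.
  by move: H2; rewrite mulNmx !mxE eqxx mulr1n lerN2.
set y1 := usubmx w; set t := dsubmx w.
have t0 : 0 <= t 0 0 by rewrite !mxE.
have y10 i : 0 <= y1 i 0 by rewrite !mxE.
have E : y1^T *m A = t 0 0 *: c.
  move: wA; rewrite trmul_col -/y1 -/t mulmxN => /eqP; rewrite addr_eq0 opprK.
  by move/eqP ->; rewrite [t^T]mx11_scalar mul_scalar_mx !mxE.
have Eb : t 0 0 * (y^T *m b) 0 0 < (y1^T *m b) 0 0.
  move: wb; rewrite trmul_col -/y1 -/t mulmxN mul_mx_scalar !mxE => h; lra.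
have key (z : 'cV_n) : (forall i, b i 0 <= (A *m z) i 0) ->
    (y1^T *m b) 0 0 <= t 0 0 * (c *m z) 0 0.
  by move=> hz; have := weakd y10 hz; rewrite E -scalemxAl [X in _ <= X -> _]mxE.
have [T0|T0] : 0 < t 0 0 \/ t 0 0 = 0.
  by move: t0; rewrite le_eqVlt => /orP [/eqP ->|->]; [right|left].
- have : (y1^T *m b) 0 0 / t 0 0 <= inf V.
    apply: lb_le_inf => // x [z [hz <-]].
    by rewrite ler_pdivrMr // mulrC key.
  rewrite leNgt => /negP; apply.
  by apply: le_lt_trans yb _; rewrite ltr_pdivlMr // mulrC.
- rewrite T0 mul0r in Eb.
  have h2 := weakd y10 Hz0; rewrite E T0 scale0r mul0mx [X in _ <= X]mxE in h2.
  by move: (lt_le_trans Eb h2); rewrite ltxx.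
Qed.
End LP2.

Section Aux.
Variable R : realFieldType.

Lemma cvgeN k (a b : 'cV[R]_k) :
  (forall i, (- a) i 0 <= (- b) i 0) <-> forall i, b i 0 <= a i 0.
Proof. by split=> H i; move: (H i); rewrite !mxE lerN2. Qed.

Lemma tr11 (M : 'M[R]_1) : M 0 0 = (M^T) 0 0.
Proof. by rewrite mxE. Qed.

Lemma dot_ge0 k (a b : 'cV[R]_k) : (forall i, 0 <= a i 0) -> (forall i, 0 <= b i 0) ->
  0 <= (a^T *m b) 0 0.
Proof.
move=> a0 b0; rewrite mxE; apply: sumr_ge0 => i _; rewrite mxE; exact: mulr_ge0.
Qed.

Lemma subE k (a b : 'cV[R]_k) i : (a - b) i 0 = a i 0 - b i 0.
Proof. by rewrite !mxE. Qed.

Lemma addE k (a b : 'cV[R]_k) i : (a + b) i 0 = a i 0 + b i 0.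
Proof. by rewrite !mxE. Qed.

Lemma sub_ge0E k (a b : 'cV[R]_k) : (forall i, (0 : 'cV_k) i 0 <= (a - b) i 0) <->
  (forall i, b i 0 <= a i 0).
Proof. by split=> H i; move: (H i); rewrite subE mxE subr_ge0. Qed.

End Aux.

Section Main.
Variables (R : realType) (mx nx p mu nu my ny : nat).
Variables (A : 'M[R]_(p, mx + nx)) (b : 'cV[R]_p).
Variables (F : 'cV[R]_(mx + nx) -> 'M[R]_(mu, nu)) (h : 'cV[R]_mu)
          (G : 'M[R]_(mu, mx + nx)).
Variables (B1 : 'M[R]_(my, mx + nx)) (B2 : 'M[R]_(my, ny)) (d : 'cV[R]_my).
Variables (c1 : 'rV[R]_(mx + nx)) (c2 : 'rV[R]_ny) (Ehat : 'M[R]_(ny, nu)).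

Lemma wdU x u y l : ts_Uset F h G x u -> ts_cvge l 0 ->
  ts_cvge ((F x)^T *m l - Ehat^T *m y) 0 ->
  ts_sdot (Ehat *m u)^T y <= ts_sdot (h + G *m x)^T l.
Proof.
move=> [u0 hu] l0 hl.
have d1 : 0 <= (u^T *m ((F x)^T *m l - Ehat^T *m y)) 0 0.
  by apply: dot_ge0 => i; [have := u0 i | have := hl i]; rewrite [X in X <= _]mxE.
have d2 : 0 <= (l^T *m ((h + G *m x) - F x *m u)) 0 0.
  apply: dot_ge0; first by move=> i; have := l0 i; rewrite mxE.
  by move=> i; rewrite subE subr_ge0; exact: hu.
move: d1 d2; rewrite !mulmxBr !subE /ts_sdot.
rewrite [(u^T *m ((F x)^T *m l)) 0 0]tr11.
rewrite [((h + G *m x)^T *m l) 0 0]tr11.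
rewrite !trmx_mul !trmxK !mulmxA.
lra.
Qed.

Lemma D1 x y : ts_Uset F h G x !=set0 ->
  (exists M : R, forall u, ts_Uset F h G x u -> forall i, `|u i 0| <= M) ->
  exists l, [/\ ts_cvge l 0, ts_cvge ((F x)^T *m l - Ehat^T *m y) 0 &
    exists2 u, ts_Uset F h G x u & ts_sdot (Ehat *m u)^T y = ts_sdot (h + G *m x)^T l].
Proof.
move=> [u0 hu0] [M hM].
pose A1 := col_mx (- F x) (1%:M : 'M[R]_nu).
pose b1 := col_mx (- (h + G *m x)) (0 : 'cV[R]_nu).
pose c' := - (y^T *m Ehat).
have feasE (u : 'cV_nu) : (forall i, b1 i 0 <= (A1 *m u) i 0) <-> ts_Uset F h G x u.
  rewrite /A1 /b1 mul_col_mx mulNmx mul1mx; split=> H.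
    by move/cvge_colP: H => [/cvgeN H1 H2]; split.
  by case: H => H1 H2; apply/cvge_colP; split=> //; apply/cvgeN.
have hf : exists z : 'cV_nu, forall i, b1 i 0 <= (A1 *m z) i 0.
  by exists u0; apply/feasE.
have hL : exists L, forall z : 'cV_nu, (forall i, b1 i 0 <= (A1 *m z) i 0) ->
    L <= (c' *m z) 0 0.
  exists (- \sum_i `|c' 0 i| * M) => u /feasE hu.
  rewrite mxE -sumrN; apply: ler_sum => i _; apply: lerNnormlW.
  by rewrite normrM; apply: ler_wpM2l; [exact: normr_ge0 | exact: hM].
have [z [yy [hz yy0 yyA yyb]]] := lp_opt hf hL.
set l := usubmx yy; set nv := dsubmx yy.
have K : (F x)^T *m l - Ehat^T *m y = nv.
  apply: trmx_inj; rewrite linearB /= !trmx_mul !trmxK.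
  move: yyA; rewrite /A1 trmul_col -/l -/nv mulmxN mulmx1 /c'.
  by move/eqP; rewrite addrC subr_eq => /eqP ->; rewrite addrC.
exists l; split.
- by move=> i; rewrite !mxE; have := yy0 (lshift nu i).
- by rewrite K => i; rewrite !mxE; have := yy0 (rshift mu i).
exists z; first exact/feasE.
move: yyb; rewrite /b1 trmul_col -/l -/nv mulmx0 addr0 mulmxN /c' mulNmx.
move=> e; rewrite /ts_sdot [X in X = _]tr11 [X in _ = X]tr11 !trmx_mul !trmxK mulmxA.
apply: oppr_inj; move: e; rewrite !mxE => e; exact: e.
Qed.

Local Notation obj1 := (ts_obj1 F h G B1 B2 d c1 c2 Ehat).
Local Notation obj2 := (ts_obj2 F h G c1 c2 Ehat).
Local Notation obj3 := (ts_obj3 h G c1 c2).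
Local Notation XX := (ts_Xset A b).
Local Notation YY := (ts_Yset B1 B2 d).
Local Notation UU := (ts_Uset F h G).
Local Notation feas3 := (ts_feas3 A b F B1 B2 d Ehat).
Local Notation val1 := (ts_val1 A b F h G B1 B2 d c1 c2 Ehat).
Local Notation val2 := (ts_val2 A b F h G B1 B2 d c1 c2 Ehat).
Local Notation val3 := (ts_val3 A b F h G B1 B2 d c1 c2 Ehat).
Local Notation valMIP := (ts_valMIP A b F h G B1 B2 d c1 c2 Ehat).
Local Notation opt1 := (ts_opt1 A b F h G B1 B2 d c1 c2 Ehat).
Local Notation opt2 := (ts_opt2 A b F h G B1 B2 d c1 c2 Ehat).
Local Notation opt3 := (ts_opt3 A b F h G B1 B2 d c1 c2 Ehat).

Local Notation Usup x y :=
  (ereal_sup [set (ts_sdot (Ehat *m u)^T y)%:E | u in ts_Uset F h G x]).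

Lemma sup_le x y l : ts_cvge l 0 -> ts_cvge ((F x)^T *m l - Ehat^T *m y) 0 ->
  (Usup x y <= (ts_sdot (h + G *m x)^T l)%:E)%E.
Proof.
move=> l0 hl; apply: ge_ereal_sup => _ [u hu <-]; rewrite lee_fin; exact: wdU.
Qed.

Lemma sup_eq x y : ts_Uset F h G x !=set0 ->
  (exists M : R, forall u, ts_Uset F h G x u -> forall i, `|u i 0| <= M) ->
  exists l, [/\ ts_cvge l 0, ts_cvge ((F x)^T *m l - Ehat^T *m y) 0 &
    Usup x y = (ts_sdot (h + G *m x)^T l)%:E].
Proof.
move=> HU HB; have [l [l0 hl [u hu e]]] := D1 y HU HB.
exists l; split=> //; apply/le_anti/andP; split; first exact: sup_le.
by apply: le_ereal_sup_tmp; exists (ts_sdot (Ehat *m u)^T y)%:E; [exists u|rewrite e].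
Qed.

Lemma obj2_le3 x y l : ts_cvge l 0 -> ts_cvge ((F x)^T *m l - Ehat^T *m y) 0 ->
  (obj2 x y <= (obj3 x y l)%:E)%E.
Proof.
by move=> l0 hl; rewrite /ts_obj2 /ts_obj3 [X in (_ <= X)%E]EFinD; apply: leeD2l; exact: sup_le.
Qed.


Lemma obj2_eq3 (HU : forall x, XX x -> UU x !=set0)
  (HB : forall x, XX x -> exists M : R, forall u, UU x u -> forall i, `|u i 0| <= M)
  x y : XX x -> exists l, [/\ ts_cvge l 0, ts_cvge ((F x)^T *m l - Ehat^T *m y) 0 &
     obj2 x y = (obj3 x y l)%:E].
Proof.
move=> hx; have [l [l0 hl e]] := sup_eq y (HU x hx) (HB x hx).
by exists l; split=> //; rewrite /ts_obj2 e -EFinD.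
Qed.

Lemma val23 (HU : forall x, XX x -> UU x !=set0)
  (HB : forall x, XX x -> exists M : R, forall u, UU x u -> forall i, `|u i 0| <= M) :
  val2 = val3.
Proof.
apply/le_anti/andP; split.
- apply: le_ereal_inf_tmp => _ [[[x y] l] /= [hx hy hl l0] <-].
  apply: (le_trans _ (obj2_le3 l0 hl)); apply: ereal_inf_lbound.
  by exists (x, y).
- apply: le_ereal_inf_tmp => _ [[x y] /= [hx hy] <-].
  have [l [l0 hl ->]] := obj2_eq3 HU HB y hx.
  by apply: ereal_inf_lbound; exists ((x, y), l).
Qed.

Lemma opt23 (HU : forall x, XX x -> UU x !=set0)
  (HB : forall x, XX x -> exists M : R, forall u, UU x u -> forall i, `|u i 0| <= M) :
  forall x, opt2 x <-> opt3 x.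
Proof.
move=> x; split.
- move=> [y [hx hy e]]; have [l [l0 hl e2]] := obj2_eq3 HU HB y hx.
  by exists y, l; split; [split|rewrite -e2 e val23].
- move=> [y [l [[hx hy hl l0] e]]]; exists y; split=> //.
  apply/le_anti/andP; split; last by apply: ereal_inf_lbound; exists (x, y).
  by rewrite (val23 HU HB) -e; apply: obj2_le3.
Qed.


Lemma c2hatE u y : ts_sdot (ts_c2hat c2 Ehat u) y = ts_sdot c2 y + ts_sdot (Ehat *m u)^T y.
Proof. by rewrite /ts_sdot /ts_c2hat mulmxDl mxE addrC. Qed.

Lemma obj1_le (HU : forall x, XX x -> UU x !=set0)
  (HB : forall x, XX x -> exists M : R, forall u, UU x u -> forall i, `|u i 0| <= M)
  x y : XX x -> YY x y -> (obj1 x <= obj2 x y)%E.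
Proof.
move=> hx hy; have [l [l0 hl ->]] := obj2_eq3 HU HB y hx.
rewrite /ts_obj1 /ts_obj3 -addrA EFinD; apply: leeD2l.
apply: ge_ereal_sup => e [u hu <-]; apply: ge_ereal_inf.
exists (ts_sdot (ts_c2hat c2 Ehat u) y)%:E; first by exists y.
by rewrite lee_fin c2hatE lerD2l; apply: wdU.
Qed.

Lemma obj1_empty x : UU x !=set0 -> ~ (exists y, YY x y) -> obj1 x = +oo%E.
Proof.
move=> [u hu] nY; rewrite /ts_obj1 ereal_supy ?addey //.
exists u => //; apply/ereal_inf_pinfty => e [y hy _]; exfalso; apply: nY; by exists y.
Qed.


Lemma lin3 (a1 a2 a3 a4 a5 : R) : a5 <= a1 + (a2 + a3) -> a3 <= a4 -> a5 - a1 <= a2 + a4.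
Proof. move=> *; lra. Qed.

Lemma obj1_ge (HU : forall x, XX x -> UU x !=set0)
  (HB : forall x, XX x -> exists M : R, forall u, UU x u -> forall i, `|u i 0| <= M)
  x y0 r : XX x -> YY x y0 -> valMIP = r%:E ->
  exists y, YY x y /\ (obj2 x y <= obj1 x)%E.
Proof.
move=> hx hy0 hr.
pose g := h + G *m x; pose e := d - B1 *m x.
pose AQ : 'M[R]_((ny + my) + (mu + nu), ny + mu) :=
  col_mx (col_mx (row_mx 1%:M 0) (row_mx B2 0))
         (col_mx (row_mx 0 1%:M) (row_mx (- Ehat^T) (F x)^T)).
pose bQ : 'cV[R]_((ny + my) + (mu + nu)) := col_mx (col_mx 0 e) (col_mx 0 0).
pose cQ : 'rV[R]_(ny + mu) := row_mx c2 g^T.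
have prodQ (y : 'cV_ny) (l : 'cV_mu) : AQ *m col_mx y l =
    col_mx (col_mx y (B2 *m y)) (col_mx l ((F x)^T *m l - Ehat^T *m y)).
  by rewrite /AQ !mul_col_mx !mul_row_col !mul1mx !mul0mx !addr0 add0r mulNmx [X in col_mx l X]addrC.
have feasQ y l : (forall i, bQ i 0 <= (AQ *m col_mx y l) i 0) <->
    [/\ YY x y, ts_cvge l 0 & ts_cvge ((F x)^T *m l - Ehat^T *m y) 0].
  rewrite prodQ /bQ; split.
    by move/cvge_colP => [/cvge_colP [H1 H2] /cvge_colP [H3 H4]].
  by move=> [[H1 H2] H3 H4]; apply/cvge_colP; split; apply/cvge_colP.
have costQ y l : (cQ *m col_mx y l) 0 0 = ts_sdot c2 y + ts_sdot g^T l.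
  by rewrite /cQ mul_row_col mxE.
have [l0' [l00 hl0 _]] := obj2_eq3 HU HB y0 hx.
have hf : exists z : 'cV_(ny + mu), forall i, bQ i 0 <= (AQ *m z) i 0.
  by exists (col_mx y0 l0'); apply/feasQ.
have [u0 hu0] := HU x hx.
have hL : exists L, forall z : 'cV_(ny + mu), (forall i, bQ i 0 <= (AQ *m z) i 0) ->
    L <= (cQ *m z) 0 0.
  exists (r - ts_sdot c1 x) => z; rewrite -(vsubmxK z) => /feasQ [hy hl0' hl'].
  rewrite costQ; apply: lin3; last exact: wdU hu0 hl0' hl'.
  rewrite -c2hatE -lee_fin -hr; apply: ereal_inf_lbound.
  by exists (x, (u0, usubmx z)).
have [z [w [hz w0 wA wb]]] := lp_opt hf hL.
set ys := usubmx z; set ls := dsubmx z.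
have ez : z = col_mx ys ls by rewrite vsubmxK.
move: hz; rewrite ez => /feasQ [hys hls hdl].
set al := usubmx (usubmx w); set mw := dsubmx (usubmx w).
set be := usubmx (dsubmx w); set uu := dsubmx (dsubmx w).
move: wA; rewrite /AQ /cQ !trmul_col !mul_mx_row !add_row_mx -/al -/mw -/be -/uu.
move=> /eq_row_mx [E1 E2].
move: E1 E2; rewrite !mulmx1 !mulmx0 !addr0 !add0r mulmxN => E1 E2.
have uuU : UU x uu.
  split; first by move=> i; rewrite !mxE; exact: w0.
  have E2' : be + F x *m uu = g.
    by apply: trmx_inj; rewrite linearD /= trmx_mul -E2.
  move=> i; have := congr1 (fun M : 'cV_mu => M i 0) E2'; rewrite /= addE => <-.
  by rewrite -subr_ge0 addrK !mxE; exact: w0.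
have Vz : (cQ *m z) 0 0 = (mw^T *m e) 0 0.
  by rewrite wb /bQ !trmul_col !mulmx0 add0r !addr0 -/mw.
have low y : YY x y -> (mw^T *m e) 0 0 <= ts_sdot (ts_c2hat c2 Ehat uu) y.
  move=> [y0' hy'].
  have C : ts_c2hat c2 Ehat uu = al^T + mw^T *m B2.
    by rewrite /ts_c2hat -E1 trmx_mul addrC addrNK.
  rewrite C /ts_sdot mulmxDl [X in _ <= X]mxE -[X in X <= _]add0r; apply: lerD.
    by apply: dot_ge0 => i; rewrite ?mxE; [exact: w0 | have := y0' i; rewrite mxE].
  by apply: weakd => // i; rewrite !mxE; exact: w0.
have h1 : ((ts_sdot c1 x + (mw^T *m e) 0 0)%:E <= obj1 x)%E.
  rewrite /ts_obj1 EFinD; apply: leeD2l; apply: le_ereal_sup_tmp.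
  exists (ereal_inf [set (ts_sdot (ts_c2hat c2 Ehat uu) y)%:E | y in YY x]).
    by exists uu.
  by apply: le_ereal_inf_tmp => _ [y hy <-]; rewrite lee_fin; exact: low.
exists ys; split => //; apply: le_trans (obj2_le3 hls hdl) _.
by rewrite /ts_obj3 -addrA -costQ -ez Vz.
Qed.


Lemma main_sec (HU : forall x, XX x -> UU x !=set0)
  (HB : forall x, XX x -> exists M : R, forall u, UU x u -> forall i, `|u i 0| <= M)
  (Hfin : valMIP \is a fin_num) :
  [/\ val1 = val2, val2 = val3, (forall x, opt1 x <-> opt2 x)
    & (forall x, opt2 x <-> opt3 x)].
Proof.
have [r hr] : exists r, valMIP = r%:E by exists (fine valMIP); rewrite fineK.
have [[x0 [u0 y0]] [hx0 [hu0 hy0]]] :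
    exists t : 'cV[R]_(mx + nx) * ('cV[R]_nu * 'cV[R]_ny),
      XX t.1 /\ UU t.1 t.2.1 /\ YY t.1 t.2.2.
  apply: NNPP => hne; move: Hfin.
  have -> : valMIP = +oo%E.
    by apply/ereal_inf_pinfty => e [t ht _]; exfalso; apply: hne; exists t.
  by [].
have V12 : val1 = val2.
  apply/le_anti/andP; split.
  - apply: le_ereal_inf_tmp => _ [[x y] /= [hx hy] <-].
    apply: le_trans (obj1_le HU HB hx hy); apply: ereal_inf_lbound; by exists x.
  - apply: le_ereal_inf_tmp => _ [x hx <-].
    case: (classic (exists y, YY x y)) => [[y hy]|nY].
      have [y' [hy' le]] := obj1_ge HU HB hx hy hr.
      by apply: le_trans le; apply: ereal_inf_lbound; exists (x, y').
    by rewrite obj1_empty ?leey //; exact: HU.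
have fin1 : (val1 < +oo)%E.
  have [l [l0 hl e]] := obj2_eq3 HU HB y0 hx0.
  apply: (le_lt_trans (ereal_inf_lbound _)); first by exists x0.
  by apply: (le_lt_trans (obj1_le HU HB hx0 hy0)); rewrite e ltry.
split=> //; [exact: val23 | | exact: opt23].
move=> x; split.
- move=> [hx e]; case: (classic (exists y, YY x y)) => [[y hy]|nY].
    have [y' [hy' le]] := obj1_ge HU HB hx hy hr.
    exists y'; split=> //; rewrite -V12 -e; apply/le_anti/andP; split=> //.
    exact: obj1_le.
  by move: fin1; rewrite -e obj1_empty ?ltxx //; exact: HU.
- move=> [y [hx hy e]]; split=> //; apply/le_anti/andP; split.
    by rewrite V12 -e; exact: obj1_le.
  by apply: ereal_inf_lbound; exists x.
Qed.

End Main.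

Theorem proposition5 (R : realType) (mx nx p mu nu my ny : nat)
  (A : 'M[R]_(p, mx + nx)) (b : 'cV[R]_p)
  (F : 'cV[R]_(mx + nx) -> 'M[R]_(mu, nu)) (h : 'cV[R]_mu) (G : 'M[R]_(mu, mx + nx))
  (B1 : 'M[R]_(my, mx + nx)) (B2 : 'M[R]_(my, ny)) (d : 'cV[R]_my)
  (c1 : 'rV[R]_(mx + nx)) (c2 : 'rV[R]_ny) (Ehat : 'M[R]_(ny, nu)) :
  (* U(x) nonempty and bounded for every x in X *)
  (forall x, ts_Xset A b x -> ts_Uset F h G x !=set0) ->
  (forall x, ts_Xset A b x -> exists M : R, forall u, ts_Uset F h G x u -> forall i, `|u i 0| <= M) ->
  (* the mixed integer program min{c1 x + ts_c2hat(u) y} has a finite optimal value *)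
  ts_valMIP A b F h G B1 B2 d c1 c2 Ehat \is a fin_num ->
  [/\ ts_val1 A b F h G B1 B2 d c1 c2 Ehat = ts_val2 A b F h G B1 B2 d c1 c2 Ehat,
      ts_val2 A b F h G B1 B2 d c1 c2 Ehat = ts_val3 A b F h G B1 B2 d c1 c2 Ehat,
      (forall x, ts_opt1 A b F h G B1 B2 d c1 c2 Ehat x <-> ts_opt2 A b F h G B1 B2 d c1 c2 Ehat x)
    & (forall x, ts_opt2 A b F h G B1 B2 d c1 c2 Ehat x <-> ts_opt3 A b F h G B1 B2 d c1 c2 Ehat x)].
Proof. by move=> HU HB Hfin; apply: main_sec. Qed.
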